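(* Let $G=(V,E)$ be a finite simple graph and let $\mathcal{F}$ be a (possibly empty) collection of minimal forts of $G$. Consider the integer program $\mathrm{MFF}(G,\mathcal{F})$: $$\text{minimize }\sum_{v\in V}x_v\ \text{ subject to }\ \sum_{v\in V}x_v\geq1,\quad x_u-x_v+\sum_{w\in N(u)\setminus\{v\}}x_w\geq0\ \ \forall v\in V,\ u\in N(v),\quad \sum_{v\in F}x_v\leq|F|-1\ \ \forall F\in\mathcal{F},\quad x\in\{0,1\}^V.$$ Suppose $\mathrm{MFF}(G,\mathcal{F})$ is feasible, let $x$ be an optimal solution, and let $F'=\{v\in V\colon x_v=1\}$. Then $\mathcal{F}\cup\{F'\}$ is a collection of minimal forts of $G$.
   Context: $N(u)$ denotes the neighborhood of $u$. A fort of $G$ is a non-empty set $F\subseteq V$ such that no vertex $u\in V\setminus F$ has exactly one neighbor in $F$. A fort is minimal if no fort of $G$ is a proper subset of it. *)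

(* Defs.v *)
From mathcomp Require Import all_boot all_order.
Set Implicit Arguments. Unset Strict Implicit. Unset Printing Implicit Defensive.

Definition simple_graph (T : finType) (e : rel T) : Prop :=
  symmetric e /\ irreflexive e.

Definition nbhd (T : finType) (e : rel T) (u : T) : {set T} := [set w | e u w].

Definition is_fort (T : finType) (e : rel T) (F : {set T}) : Prop :=
  F != set0 /\ forall u, u \notin F -> #|nbhd e u :&: F| != 1.

Definition is_minimal_fort (T : finType) (e : rel T) (F : {set T}) : Prop :=
  is_fort e F /\ forall F' : {set T}, F' \proper F -> ~ is_fort e F'.

(* Feasibility of a 0/1 vector x for MFF(G, FF).  The constraint
   x_u - x_v + sum_{w in N(u)\{v}} x_w >= 0 is written over nat as
   x_v <= x_u + sum_{w in N(u)\{v}} x_w. *)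
Definition MFF_feasible (T : finType) (e : rel T) (FF : {set {set T}})
  (x : {ffun T -> bool}) : Prop :=
  [/\ 1 <= \sum_(v : T) nat_of_bool (x v),
      forall v u, e v u ->
        nat_of_bool (x v) <= nat_of_bool (x u) + \sum_(w in nbhd e u :\ v) nat_of_bool (x w)
    & forall F, F \in FF -> \sum_(v in F) nat_of_bool (x v) <= #|F| - 1].

Definition MFF_optimal (T : finType) (e : rel T) (FF : {set {set T}})
  (x : {ffun T -> bool}) : Prop :=
  MFF_feasible e FF x /\
  forall y, MFF_feasible e FF y ->
    \sum_(v : T) nat_of_bool (x v) <= \sum_(v : T) nat_of_bool (y v).

(* Main.v *)
Require Import Defs.
From mathcomp Require Import all_boot all_order.
From mathcomp Require Import zify.

Lemma sumS (T : finType) (A S : {set T}) :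
  \sum_(w in A) nat_of_bool (w \in S) = #|A :&: S|.
Proof.
rewrite (eq_bigr (fun w => if w \in S then 1 else 0)); last by move=> w _; case: (w \in S).
rewrite -big_mkcondr /= sum1_card.
by apply: eq_card => w; rewrite !inE.
Qed.

Lemma sumT (T : finType) (S : {set T}) :
  \sum_(w : T) nat_of_bool (w \in S) = #|S|.
Proof.
have -> : \sum_(w : T) nat_of_bool (w \in S) = \sum_(w in [set: T]) nat_of_bool (w \in S).
  by apply: eq_bigl => w; rewrite inE.
by rewrite sumS setTI.
Qed.

Lemma feas_iff (T : finType) (e : rel T) (FF : {set {set T}}) (f : {ffun T -> bool})
  (S : {set T}) (hf : forall w, f w = (w \in S)) :
  simple_graph e -> (forall F, F \in FF -> F != set0) ->
  MFF_feasible e FF f <-> is_fort e S /\ forall F, F \in FF -> ~~ (F \subset S).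
Proof.
move=> [esym eirr] FFne.
have sA : forall A : {set T}, \sum_(w in A) nat_of_bool (f w) = #|A :&: S|.
  by move=> A; rewrite -sumS; apply: eq_bigr => w _; rewrite hf.
have sT : \sum_(w : T) nat_of_bool (f w) = #|S|.
  by rewrite -sumT; apply: eq_bigr => w _; rewrite hf.
split.
- case=> H1 H2 H3; split; last first.
    move=> F FF0; have := H3 F FF0; rewrite sA => h.
    apply/negP => sub; move: h; rewrite (setIidPl sub).
    have : 0 < #|F| by rewrite card_gt0; exact: FFne.
    lia.
  split; first by rewrite -card_gt0 -sT.
  move=> u uS; apply/negP; case/cards1P => v hv.
  have vin : v \in nbhd e u :&: S by rewrite hv set11.
  move: vin; rewrite !inE => /andP [euv vS].
  have := H2 v u; rewrite esym euv => /(_ isT).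
  rewrite !hf vS (negbTE uS) sA.
  have -> : (nbhd e u :\ v) :&: S = set0.
    apply/setP => w; rewrite !inE.
    move/setP: hv => /(_ w); rewrite !inE => h.
    by rewrite -andbA h; case: (w == v).
  by rewrite cards0.
- case=> [[Sne Sfort] Hav]; split.
  + by rewrite sT card_gt0.
  + move=> v u evu; rewrite !hf sA.
    case vS: (v \in S) => //=; case uS: (u \in S) => //=.
    have := Sfort u (negbT uS).
    have vin : v \in nbhd e u :&: S by rewrite !inE esym evu vS.
    have eqI : (nbhd e u :\ v) :&: S = (nbhd e u :&: S) :\ v.
      by apply/setP => w; rewrite !inE; case: (w == v); rewrite ?andbF.
    rewrite eqI; have := cardsD1 v (nbhd e u :&: S); rewrite vin.
    move=> h; move/eqP; lia.
  + move=> F FF0; rewrite sA.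
    have hp : F :&: S \proper F.
      rewrite properEneq subsetIl andbT; apply/negP => /eqP h.
      by move: (Hav F FF0); rewrite -h subsetIr.
    have := proper_card hp; lia.
Qed.

Theorem theorem6p2 (T : finType) (e : rel T) (FF : {set {set T}})
  (x : {ffun T -> bool}) :
  simple_graph e ->
  (forall F, F \in FF -> is_minimal_fort e F) ->
  MFF_optimal e FF x ->
  forall F, F \in FF :|: [set [set v | x v]] -> is_minimal_fort e F.
Proof.
move=> sg HFF [xf xopt] F; rewrite !inE => /orP [/HFF // | /eqP ->].
have FFne : forall F, F \in FF -> F != set0 by move=> G /HFF [[]].
set S := [set v | x v].
have hx : forall w, x w = (w \in S) by move=> w; rewrite inE.
have [Sf Sav] := (@feas_iff T e FF x S hx sg FFne).1 xf.
split => // F2 pF2 F2f.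
pose y := [ffun v => v \in F2].
have hy : forall w, y w = (w \in F2) by move=> w; rewrite ffunE.
have yf : MFF_feasible e FF y.
  apply/(@feas_iff T e FF y F2 hy sg FFne); split => // G GF.
  apply/negP => sub; move: (Sav G GF); rewrite (subset_trans sub (proper_sub pF2)).
  done.
have := xopt y yf.
rewrite (eq_bigr (fun w => nat_of_bool (w \in S))); last by move=> w _; rewrite hx.
rewrite (eq_bigr (fun w => nat_of_bool (w \in F2)) (F1 := fun w => nat_of_bool (y w))); last by move=> w _; rewrite hy.
rewrite !sumT; have := proper_card pF2; lia.
Qed.
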